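(* Let $A,B\in\mathbb{R}^{N\times N}$, $\tau>0$, $T>0$. The system $u'(t)=Au(t)+Bu(t-\tau)$ has no nontrivial $T$-periodic solutions if and only if $$h_k:=\det\begin{pmatrix}X_k & -Y_k\\ Y_k & X_k\end{pmatrix}\neq0\quad\text{for all }k\in\mathbb{N}_0,$$ where $X_k:=A+\cos(\lambda_k\tau)B$, $Y_k:=\lambda_kI+\sin(\lambda_k\tau)B$ and $\lambda_k:=2k\pi/T$. *)

(* Defs.v *)
From HB Require Import structures.
From Stdlib Require Import Reals ClassicalEpsilon FunctionalExtensionality.
From mathcomp Require Import all_boot all_order all_algebra.

Set Implicit Arguments.
Unset Strict Implicit.
Unset Printing Implicit Defensive.

(* NB: after importing MathComp, the key %R denotes ring_scope; Stdlib's
   R_scope is opened here so bare numerals/operators are Stdlib reals. *)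
Local Open Scope R_scope.

Definition R_eqb (x y : R) : bool := if Req_EM_T x y then true else false.
Lemma R_eqP : Equality.axiom R_eqb.
Proof. by move=> x y; rewrite /R_eqb; case: Req_EM_T => H; constructor. Qed.

HB.instance Definition _ := hasDecEq.Build R R_eqP.

Definition R_find (P : pred R) (n : nat) : option R :=
  match excluded_middle_informative (exists x, P x) with
  | left H => Some (proj1_sig (constructive_indefinite_description _ H))
  | right _ => None
  end.

Lemma R_find_correct P n x : R_find P n = Some x -> P x.
Proof.
rewrite /R_find; case: excluded_middle_informative => // H [<-].
exact: proj2_sig (constructive_indefinite_description _ H).
Qed.

Lemma R_find_complete (P : pred R) : (exists x, P x) -> exists n, R_find P n.
Proof. by move=> H; exists 0%N; rewrite /R_find; case: excluded_middle_informative. Qed.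

Lemma R_find_ext (P Q : pred R) : P =1 Q -> R_find P =1 R_find Q.
Proof. by move=> /functional_extensionality -> n. Qed.

HB.instance Definition _ :=
  hasChoice.Build R R_find_correct R_find_complete R_find_ext.

Lemma R_addA : ssrfun.associative Rplus. Proof. by move=> x y z; rewrite Rplus_assoc. Qed.
Lemma R_addC : ssrfun.commutative Rplus. Proof. exact: Rplus_comm. Qed.
Lemma R_add0 : left_id 0 Rplus. Proof. exact: Rplus_0_l. Qed.
Lemma R_addN : left_inverse 0 Ropp Rplus. Proof. exact: Rplus_opp_l. Qed.

HB.instance Definition _ := GRing.isZmodule.Build R R_addA R_addC R_add0 R_addN.

Lemma R_mulA : ssrfun.associative Rmult. Proof. by move=> x y z; rewrite Rmult_assoc. Qed.
Lemma R_mulC : ssrfun.commutative Rmult. Proof. exact: Rmult_comm. Qed.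
Lemma R_mul1 : left_id 1 Rmult. Proof. exact: Rmult_1_l. Qed.
Lemma R_mulDl : left_distributive Rmult Rplus.
Proof. by move=> x y z; rewrite Rmult_plus_distr_r. Qed.
Lemma R_one_neq0 : (1 : R) != 0.
Proof. by apply/eqP; exact: R1_neq_R0. Qed.

HB.instance Definition _ :=
  GRing.Zmodule_isComNzRing.Build R R_mulA R_mulC R_mul1 R_mulDl R_one_neq0.

Definition dde_solution (N : nat) (A B : 'M[R]_N) (tau : R)
    (u : 'I_N -> R -> R) : Prop :=
  forall (t : R) (i : 'I_N),
    derivable_pt_lim (u i) t
      (\sum_(j < N) (A i j * u j t + B i j * u j (t - tau)))%R.

Definition T_periodic (N : nat) (T : R) (u : 'I_N -> R -> R) : Prop :=
  forall (t : R) (i : 'I_N), u i (t + T) = u i t.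

Definition nontrivial (N : nat) (u : 'I_N -> R -> R) : Prop :=
  exists (t : R) (i : 'I_N), u i t <> 0.

Definition lam (T : R) (k : nat) : R := 2 * INR k * PI / T.

Definition Xk (N : nat) (A B : 'M[R]_N) (tau T : R) (k : nat) : 'M[R]_N :=
  (A + cos (lam T k * tau) *: B)%R.
Definition Yk (N : nat) (B : 'M[R]_N) (tau T : R) (k : nat) : 'M[R]_N :=
  ((lam T k)%:M + sin (lam T k * tau) *: B)%R.

Definition hk (N : nat) (A B : 'M[R]_N) (tau T : R) (k : nat) : R :=
  (\det (block_mx (Xk A B tau T k) (- Yk B tau T k)
                  (Yk B tau T k) (Xk A B tau T k)))%R.

(* Main.v *)
Require Import Defs.
From HB Require Import structures.
From Stdlib Require Import Reals Lra.
From mathcomp Require Import all_boot all_order all_algebra.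
From mathcomp Require Import ring.
Ltac mcring := ring.
Import Stdlib.setoid_ring.Ring_tac Stdlib.setoid_ring.Field_tac.
Import GRing.Theory.
Local Open Scope ring_scope.

Definition Rf : Type := R.
HB.instance Definition _ := GRing.ComNzRing.on Rf.
Lemma Rf_mulVf (x : Rf) : x != 0%R -> (Rinv x * x)%R = 1%R.
Proof. move=> /eqP h; exact: Rinv_l h. Qed.
Lemma Rf_inv0 : Rinv (0%R : Rf) = 0%R.
Proof. exact: Rinv_0. Qed.
HB.instance Definition _ := GRing.ComNzRing_isField.Build Rf Rf_mulVf Rf_inv0.

Lemma ker_of_det0 n (M : 'M[R]_n) : \det M = 0 ->
  exists2 v : 'cV[R]_n, v != 0 & M *m v = 0.
Proof.
move=> h.
have: \det (M^T : 'M[Rf]_n) == 0 by rewrite det_tr; apply/eqP; exact: h.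
case/det0P => v nz hv. exists (v^T); first by rewrite trmx_eq0.
by have := congr1 trmx hv; rewrite trmx_mul trmxK trmx0.
Qed.

Lemma ker_det_ne0 n (M : 'M[R]_n) (v : 'cV[R]_n) : \det M <> 0 -> M *m v = 0 -> v = 0.
Proof.
move=> hd hv.
have: \adj M *m (M *m v) = 0 by rewrite hv mulmx0.
rewrite mulmxA mul_adj_mx mul_scalar_mx => /matrixP h.
apply/matrixP => i j; move: (h i j); rewrite !mxE => e.
case: (Rmult_integral _ _ e) => // /hd [].
Qed.

Section K.
Variables (N : nat) (A B : 'M[R]_N) (la co si : R).

Definition KerE (C S : 'I_N -> R) :=
  forall i : 'I_N,
   \sum_(j < N) (A i j * C j + B i j * (co * C j - si * S j)) = la * S i /\
   \sum_(j < N) (A i j * S j + B i j * (co * S j + si * C j)) = - (la * C i).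

Definition XX : 'M[R]_N := A + co *: B.
Definition YY : 'M[R]_N := la%:M + si *: B.

Lemma sum_delta (i : 'I_N) (F : 'I_N -> R) :
  \sum_(j < N) (la%:M : 'M[R]_N) i j * F j = la * F i.
Proof.
rewrite (bigD1 i) //= big1 ?addr0; first by rewrite mxE eqxx mulr1n.
by move=> j /negbTE nj; rewrite mxE eq_sym nj mulr0n mul0r.
Qed.

Lemma KerM (C S : 'I_N -> R) :
  block_mx XX (- YY) YY XX *m col_mx (\col_j C j) (\col_j S j) = 0 <-> KerE C S.
Proof.
rewrite mul_block_col.
have e1 i : ((XX *m \col_j C j) + (- YY *m \col_j S j)) i 0 =
   \sum_(j < N) (A i j * C j + B i j * (co * C j - si * S j)) - la * S i.
  rewrite !mxE -sum_delta -sumrB -big_split /=.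
  apply: eq_bigr => j _; rewrite !mxE.
  by mcring.
have e2 i : ((YY *m \col_j C j) + (XX *m \col_j S j)) i 0 =
   \sum_(j < N) (A i j * S j + B i j * (co * S j + si * C j)) + la * C i.
  rewrite !mxE -sum_delta -big_split -big_split /=.
  apply: eq_bigr => j _; rewrite !mxE.
  by mcring.
split.
- move=> /matrixP h i.
  have h1 := h (lshift N i) 0.
  have h2 := h (rshift N i) 0.
  rewrite col_mxEu [in RHS]mxE in h1. rewrite col_mxEd [in RHS]mxE in h2.
  rewrite e1 in h1. rewrite e2 in h2.
  split; first by apply/eqP; rewrite -subr_eq0 h1.
  by apply/eqP; rewrite -subr_eq0 opprK h2.
- move=> h; apply/matrixP => p q; rewrite (ord1 q) [RHS]mxE.
  rewrite -(splitK p); case: (fintype.split p) => i /=.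
  + by rewrite col_mxEu e1 (proj1 (h i)) subrr.
  + by rewrite col_mxEd e2 (proj2 (h i)) addNr.
Qed.

Lemma KerE_swap C S : KerE C S -> KerE S (fun j => - C j).
Proof.
move=> h i; have [h1 h2] := h i; split.
- rewrite mulrN -h2; apply: eq_bigr => j _; by mcring.
- rewrite -h1 -sumrN; apply: eq_bigr => j _; by mcring.
Qed.
End K.
Arguments KerE {N}.
Arguments KerM {N}.
Arguments KerE_swap {N}.

Definition la_ (T : R) k := lam T k.
Lemma L1 N (A B : 'M[R]_N) tau T k : hk A B tau T k = 0 ->
  exists C S, KerE A B (lam T k) (cos (lam T k * tau)) (sin (lam T k * tau)) C S
   /\ exists i, C i <> 0.
Proof.
move=> /ker_of_det0 [v nz hv].
pose C j := v (lshift N j) 0; pose S j := v (rshift N j) 0.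
have ev : v = col_mx (\col_j C j) (\col_j S j).
  apply/matrixP => p q; rewrite (ord1 q).
  rewrite -(splitK p); case: (fintype.split p) => i /=.
  + by rewrite col_mxEu mxE.
  + by rewrite col_mxEd mxE.
rewrite ev in hv.
have hK := (proj1 (KerM A B _ _ _ _ _) hv).
case: (boolP [exists i, C i != 0]) => [/existsP [i hi] | /existsPn hC].
  by exists C, S; split => //; exists i; apply/eqP.
case: (boolP [exists i, S i != 0]) => [/existsP [i hi] | /existsPn hS].
  exists S, (fun j => - C j); split; first exact: KerE_swap.
  by exists i; apply/eqP.
move: nz; rewrite ev; case/negP; apply/eqP/matrixP => p q; rewrite (ord1 q) [RHS]mxE.
rewrite -(splitK p); case: (fintype.split p) => i /=.
+ by rewrite col_mxEu mxE; apply/eqP; rewrite -[_ == _]negbK hC.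
+ by rewrite col_mxEd mxE; apply/eqP; rewrite -[_ == _]negbK hS.
Qed.

Lemma L2 N (A B : 'M[R]_N) tau T k C S : hk A B tau T k <> 0 ->
  KerE A B (lam T k) (cos (lam T k * tau)) (sin (lam T k * tau)) C S ->
  forall i, C i = 0 /\ S i = 0.
Proof.
move=> hd /(KerM) /(@ker_det_ne0 _ _ _ hd) /matrixP h i; split.
- by have := h (lshift N i) 0; rewrite col_mxEu !mxE.
- by have := h (rshift N i) 0; rewrite col_mxEd !mxE.
Qed.

From Coquelicot Require Import Coquelicot.
Local Open Scope R_scope.

Definition Kz (z : R) := exists k : nat, z = INR k \/ z = - INR k.

Lemma Kz_0 : Kz 0. Proof. by exists 0%nat; left. Qed.

Lemma Kz_pm z : Kz z -> Kz (z+1) /\ Kz (z-1).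
Proof.
case=> k [->|->].
- split; first by exists k.+1; left; rewrite S_INR.
  case: k => [|k]; first by exists 1%nat; right; simpl; ring.
  by exists k; left; rewrite S_INR; ring.
- split; last by exists k.+1; right; rewrite S_INR; ring.
  case: k => [|k]; first by exists 1%nat; left; simpl; ring.
  by exists k; right; rewrite S_INR; ring.
Qed.

Section Fourier.
Variable w : R.

Inductive TP : (R -> R) -> Prop :=
| TPc z : Kz z -> TP (fun t => cos (z * w * t))
| TPs z : Kz z -> TP (fun t => sin (z * w * t))
| TPadd g h : TP g -> TP h -> TP (fun t => g t + h t)
| TPscal a g : TP g -> TP (fun t => a * g t)
| TPext g h : (forall t, g t = h t) -> TP g -> TP h.
Arguments TPc {z}. Arguments TPs {z}. Arguments TPadd {g h}.
Arguments TPscal a {g}. Arguments TPext {g h}.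

Lemma TP_const c : TP (fun _ => c).
Proof.
apply: (TPext _ (TPscal c (TPc Kz_0))) => t.
by rewrite !Rmult_0_l cos_0 Rmult_1_r.
Qed.

Lemma pcc z t : cos (w*t) * cos (z*w*t) = /2 * cos ((z+1)*w*t) + /2 * cos ((z-1)*w*t).
Proof.
replace ((z+1)*w*t) with (z*w*t + w*t) by ring.
replace ((z-1)*w*t) with (z*w*t - w*t) by ring.
rewrite cos_plus cos_minus; field.
Qed.
Lemma pcs z t : cos (w*t) * sin (z*w*t) = /2 * sin ((z+1)*w*t) + /2 * sin ((z-1)*w*t).
Proof.
replace ((z+1)*w*t) with (z*w*t + w*t) by ring.
replace ((z-1)*w*t) with (z*w*t - w*t) by ring.
rewrite sin_plus sin_minus; field.
Qed.
Lemma psc z t : sin (w*t) * cos (z*w*t) = /2 * sin ((z+1)*w*t) + (- /2) * sin ((z-1)*w*t).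
Proof.
replace ((z+1)*w*t) with (z*w*t + w*t) by ring.
replace ((z-1)*w*t) with (z*w*t - w*t) by ring.
rewrite sin_plus sin_minus; field.
Qed.
Lemma pss z t : sin (w*t) * sin (z*w*t) = /2 * cos ((z-1)*w*t) + (- /2) * cos ((z+1)*w*t).
Proof.
replace ((z+1)*w*t) with (z*w*t + w*t) by ring.
replace ((z-1)*w*t) with (z*w*t - w*t) by ring.
rewrite cos_plus cos_minus; field.
Qed.

Lemma TP_mul g : TP g -> TP (fun t => cos (w*t) * g t) /\ TP (fun t => sin (w*t) * g t).
Proof.
elim=> {g}.
- move=> z hz; have [h1 h2] := Kz_pm _ hz; split.
  + apply: (TPext _ (TPadd (TPscal (/2) (TPc h1)) (TPscal (/2) (TPc h2)))) => t.
    by rewrite pcc.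
  + apply: (TPext _ (TPadd (TPscal (/2) (TPs h1)) (TPscal (-/2) (TPs h2)))) => t.
    by rewrite psc.
- move=> z hz; have [h1 h2] := Kz_pm _ hz; split.
  + apply: (TPext _ (TPadd (TPscal (/2) (TPs h1)) (TPscal (/2) (TPs h2)))) => t.
    by rewrite pcs.
  + apply: (TPext _ (TPadd (TPscal (/2) (TPc h2)) (TPscal (-/2) (TPc h1)))) => t.
    by rewrite pss.
- move=> g h _ [a1 a2] _ [b1 b2]; split.
  + by apply: (TPext _ (TPadd a1 b1)) => t; ring.
  + by apply: (TPext _ (TPadd a2 b2)) => t; ring.
- move=> a g _ [a1 a2]; split.
  + by apply: (TPext _ (TPscal a a1)) => t; ring.
  + by apply: (TPext _ (TPscal a a2)) => t; ring.
- move=> g h e _ [a1 a2]; split.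
  + by apply: (TPext _ a1) => t; rewrite e.
  + by apply: (TPext _ a2) => t; rewrite e.
Qed.

Lemma TP_kernel x c n : TP (fun t => (c + cos (w*(t - x)))^n).
Proof.
elim: n => [|n IH]; first exact: (TPext _ (TP_const 1)).
have [m1 m2] := TP_mul _ IH.
apply: (TPext _ (TPadd (TPscal c IH) (TPadd (TPscal (cos (w*x)) m1) (TPscal (sin (w*x)) m2)))) => t.
rewrite /= (_ : w * (t - x) = w*t - w*x); last by ring.
rewrite cos_minus; ring.
Qed.

Lemma TP_cont g : TP g -> forall t, continuous g t.
Proof.
elim=> {g}.
- by move=> z _ t; apply: ex_derive_continuous; auto_derive.
- by move=> z _ t; apply: ex_derive_continuous; auto_derive.
- by move=> g h _ hg _ hh t; apply: (continuous_plus g h).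
- by move=> a g _ hg t; apply: (continuous_mult (fun _ => a) g) => //; apply: continuous_const.
- by move=> g h e _ hg t; apply: (continuous_ext g) => //.
Qed.

End Fourier.

Arguments TPc {w z}. Arguments TPs {w z}. Arguments TPadd {w g h}.
Arguments TPscal {w} a {g}. Arguments TPext {w g h}.

Lemma cont_ex (f : R -> R) a b : (forall t, continuous f t) -> ex_RInt f a b.
Proof. by move=> h; apply: ex_RInt_continuous => z _; apply: h. Qed.

Lemma cont_mul (f g : R -> R) t : continuous f t -> continuous g t -> continuous (fun t => f t * g t) t.
Proof. by move=> hf hg; apply: (continuous_mult f g). Qed.

Lemma RInt_per (T : R) (h : R -> R) a : (forall t, continuous h t) -> (forall t, h (t+T) = h t) ->
  RInt h a (a+T) = RInt h 0 T.
Proof.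
move=> hc hp.
have ex b c : ex_RInt h b c by apply: cont_ex.
rewrite -(RInt_Chasles h a 0 (a+T)) ?ex // -(RInt_Chasles h 0 T (a+T)) ?ex //.
have e : RInt h T (a+T) = RInt h 0 a.
  have := RInt_comp_lin h 1 T 0 a (ex _ _).
  rewrite (_ : 1*0+T = T); last ring.
  rewrite (_ : 1*a+T = a+T); last ring.
  move=> <-; apply: RInt_ext => y _.
  by rewrite /scal /= /mult /= !Rmult_1_l hp.
rewrite e -(opp_RInt_swap h 0 a) ?ex //.
rewrite /plus /opp /=; ring.
Qed.

Section Four2.
Variable T : R.
Hypothesis hT : 0 < T.
Definition om := 2 * PI / T.

Lemma TP_per g : TP om g -> forall t, g (t+T) = g t.
Proof.
have hT0 : T <> 0 by lra.
elim=> {g}.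
- move=> z [k [->|->]] t.
  + rewrite -(cos_period (INR k * om * t) k); f_equal; rewrite /om; field; auto.
  + rewrite -(cos_period (_ * om * (t+T)) k); f_equal; rewrite /om; field; auto.
- move=> z [k [->|->]] t.
  + rewrite -(sin_period (INR k * om * t) k); f_equal; rewrite /om; field; auto.
  + rewrite -(sin_period (_ * om * (t+T)) k); f_equal; rewrite /om; field; auto.
- by move=> g h _ hg _ hh t; rewrite hg hh.
- by move=> a g _ hg t; rewrite hg.
- by move=> g h e _ hg t; rewrite -!e hg.
Qed.

Definition orth (f : R -> R) := forall k : nat,
  RInt (fun t => f t * cos (INR k * om * t)) 0 T = 0 /\
  RInt (fun t => f t * sin (INR k * om * t)) 0 T = 0.

Lemma TP_orth0 (f : R -> R) : (forall t, continuous f t) -> orth f ->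
  forall g, TP om g -> RInt (fun t => f t * g t) 0 T = 0.
Proof.
move=> fc hf.
have exm g : TP om g -> ex_RInt (fun t => f t * g t) 0 T.
  by move=> hg; apply: cont_ex => t; apply: cont_mul; [exact: fc | exact: (TP_cont _ _ hg)].
move=> g; elim=> {g}.
- move=> z [k [->|->]]; first exact: (proj1 (hf k)).
  rewrite -[RHS](proj1 (hf k)); apply: RInt_ext => t _.
  by rewrite (_ : - INR k * om * t = - (INR k * om * t)) ?cos_neg //; ring.
- move=> z [k [->|->]]; first exact: (proj2 (hf k)).
  have hs : TP om (fun t => sin (INR k * om * t)) by apply: TPs; exists k; left.
  rewrite (RInt_ext _ (fun t => scal (-1) (f t * sin (INR k * om * t)))).
    by rewrite RInt_scal ?(proj2 (hf k)) ?scal_zero_r //; apply: exm.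
  move=> t _; rewrite /scal /= /mult /=.
  by rewrite (_ : - INR k * om * t = - (INR k * om * t)) ?sin_neg //; ring.
- move=> g h tg ig th ih.
  rewrite (RInt_ext _ (fun t => plus (f t * g t) (f t * h t))).
    by rewrite RInt_plus ?ig ?ih ?plus_zero_l //; apply: exm.
  by move=> t _; rewrite /plus /=; ring.
- move=> a g tg ig.
  rewrite (RInt_ext _ (fun t => scal a (f t * g t))).
    by rewrite RInt_scal ?ig ?scal_zero_r //; apply: exm.
  by move=> t _; rewrite /scal /= /mult /=; ring.
- move=> g h e tg ig; rewrite -[RHS]ig; apply: RInt_ext => t _; by rewrite e.
Qed.

Lemma TP_orth (f : R -> R) : (forall t, continuous f t) -> (forall t, f (t+T) = f t) -> orth f ->
  forall g, TP om g -> forall a, RInt (fun t => f t * g t) a (a+T) = 0.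
Proof.
move=> fc fp hf g tg a.
rewrite RInt_per ?TP_orth0 //.
- by move=> t; apply: cont_mul; [exact: fc | exact: (TP_cont _ _ tg)].
- by move=> t; rewrite fp (TP_per _ tg).
Qed.

End Four2.

Lemma cos_mono u v : 0 <= u -> u <= v -> v <= PI -> cos v <= cos u.
Proof.
move=> h1 h2 h3; case: (Req_dec u v) => [->|ne]; first lra.
apply: Rlt_le; apply: cos_decreasing_1; lra.
Qed.

Lemma cos_abs y : cos (Rabs y) = cos y.
Proof.
case: (Rcase_abs y) => h; first by rewrite Rabs_left // cos_neg.
by rewrite Rabs_right.
Qed.

Lemma cont_pt (f : R -> R) x : continuous f x -> continuity_pt f x.
Proof. exact: (proj2 (continuity_pt_filterlim f x)). Qed.

Section Four3.
Variable T : R.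
Hypothesis hT : 0 < T.

Lemma no_pos (f : R -> R) x : (forall t, continuous f t) ->
  (forall g, TP (om T) g -> forall a, RInt (fun t => f t * g t) a (a+T) = 0) ->
  ~ 0 < f x.
Proof.
move=> fc H hx.
set m := f x.
have [eta [heta Heta]] : exists eta, 0 < eta /\ forall t, Rabs (t - x) < eta -> m/2 < f t.
  have := cont_pt _ _ (fc x).
  rewrite /continuity_pt /continue_in /limit1_in /limit_in => /= h.
  have [alp [ha Ha]] := h (m/2) ltac:(rewrite /m; lra).
  exists alp; split => // t ht.
  case: (Req_dec t x) => [->|ne]; first by rewrite /m; lra.
  have := Ha t (conj (conj I (nesym ne)) ht).
  rewrite /= /R_dist => /Rabs_def2 [h1 h2]; rewrite /m in h1 h2 *; lra.
set e := Rmin eta (T/4).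
have he : 0 < e by apply: Rmin_pos; lra.
have he1 : e <= eta by apply: Rmin_l.
have he2 : e <= T/4 by apply: Rmin_r.
set w := om T.
have hPI := PI_RGT_0.
have hw : 0 < w by rewrite /w /om; apply: Rdiv_lt_0_compat; lra.
have wT : w * T = 2 * PI by rewrite /w /om; field; lra.
have hwe : w * e <= PI/2.
  have : w * e <= w * (T/4) by apply: Rmult_le_compat_l; lra.
  lra.
set c0 := cos (w*e).
have c0b : -1 <= c0 <= 1 by apply: COS_bound.
set c1 := cos (w*(e/2)).
have hwe0 : 0 < w * e by apply: Rmult_lt_0_compat.
have hc : c0 < c1 by apply: cos_decreasing_1; lra.
set r := 1 - c0 + c1.
have hr : 1 < r by rewrite /r; lra.
set a := x - T/2.
have [Mx [hM hMx]] := continuity_ab_maj (fun t => Rabs (f t)) a (a+T) ltac:(lra)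
  (fun c _ => continuity_pt_comp f Rabs c (cont_pt _ _ (fc c)) (Rcontinuity_abs _)).
set M := Rabs (f Mx).
have hM0 : 0 <= M by apply: Rabs_pos.
have cosw t : a <= t <= a+T -> cos (w*(t-x)) = cos (w * Rabs (t-x)) /\ 0 <= w * Rabs (t - x) <= PI.
  move=> ht; split.
    by rewrite -(cos_abs (w*(t-x))) Rabs_mult (Rabs_pos_eq w) //; lra.
  have : Rabs (t - x) <= T/2 by apply: Rabs_le; rewrite /a in ht; lra.
  have := Rabs_pos (t - x).
  move=> h1 h2; split; first nra.
  have : w * Rabs (t - x) <= w * (T/2) by apply: Rmult_le_compat_l; lra.
  lra.
set q := fun t => 1 - c0 + cos (w*(t-x)).
have P1 n t : a <= t <= a+T -> - M <= f t * q t ^ n.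
  move=> ht; have [ec [b1 b2]] := cosw t ht.
  case: (Rlt_le_dec (Rabs (t-x)) e) => hte.
  - have hf : m/2 < f t by apply: Heta; lra.
    have : c0 <= cos (w * (t-x)).
      rewrite ec; apply: cos_mono; [lra | | lra].
      by apply: Rmult_le_compat_l; lra.
    move=> hq.
    have : 1 <= q t ^ n by apply: pow_R1_Rle; rewrite /q /=; lra.
    move=> hqn.
    have : 0 <= f t * q t ^ n by apply: Rmult_le_pos; rewrite /m in hx hf; lra.
    lra.
  - have : cos (w * (t-x)) <= c0.
      rewrite ec; apply: cos_mono; [lra | | lra].
      by apply: Rmult_le_compat_l; lra.
    move=> hq.
    have cb := COS_bound (w*(t-x)).
    have hqa : Rabs (q t) <= 1 by apply: Rabs_le; rewrite /q /=; split; lra.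
    have hqn : Rabs (q t ^ n) <= 1.
      rewrite -RPow_abs -(pow1 n); apply: pow_incr; split => //; exact: Rabs_pos.
    have : Rabs (f t * q t ^ n) <= M * 1.
      rewrite Rabs_mult; apply: Rmult_le_compat => //; try apply: Rabs_pos.
      by apply: hM; lra.
    have := Rle_abs (- (f t * q t ^ n)); rewrite Rabs_Ropp; lra.
have P2 n t : x - e/2 <= t <= x + e/2 -> m/2 * r ^ n <= f t * q t ^ n.
  move=> ht.
  have ht' : a <= t <= a+T by rewrite /a; lra.
  have [ec [b1 b2]] := cosw t ht'.
  have hta : Rabs (t - x) <= e/2 by apply: Rabs_le; lra.
  have hf : m/2 < f t by apply: Heta; lra.
  have : c1 <= cos (w * (t-x)).
    rewrite ec; apply: cos_mono; [lra | | lra].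
    by apply: Rmult_le_compat_l; lra.
  move=> hq.
  apply: Rmult_le_compat; first (rewrite /m; lra); first (apply: pow_le; lra); first lra.
  by apply: pow_incr; rewrite /q /r /=; lra.
have exq n b c : ex_RInt (fun t => f t * q t ^ n) b c.
  apply: cont_ex => t; apply: cont_mul => //.
  exact: (TP_cont _ _ (TP_kernel (om T) x (1 - c0) n)).
have I0 n : RInt (fun t => f t * q t ^ n) a (a+T) = 0.
  exact: (H _ (TP_kernel (om T) x (1 - c0) n) a).
set b1 := x - e/2.
set b2 := x + e/2.
have lb n : -M*(T - e) + e*(m/2*r^n) <= 0.
  rewrite -(I0 n) -(RInt_Chasles _ a b1 (a+T)) ?exq // -(RInt_Chasles _ b1 b2 (a+T)) ?exq //.
  have i1 := RInt_le (fun _ => -M) (fun t => f t * q t ^ n) a b1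
    ltac:(rewrite /b1 /a; lra) (ex_RInt_const _ _ _) (exq n a b1)
    (fun t ht => P1 n t ltac:(rewrite /b1 /a in ht *; lra)).
  have i2 := RInt_le (fun _ => m/2*r^n) (fun t => f t * q t ^ n) b1 b2
    ltac:(rewrite /b1 /b2; lra) (ex_RInt_const _ _ _) (exq n b1 b2)
    (fun t ht => P2 n t ltac:(rewrite /b1 /b2 in ht *; lra)).
  have i3 := RInt_le (fun _ => -M) (fun t => f t * q t ^ n) b2 (a+T)
    ltac:(rewrite /b2 /a; lra) (ex_RInt_const _ _ _) (exq n b2 (a+T))
    (fun t ht => P1 n t ltac:(rewrite /b2 /a in ht *; lra)).
  rewrite !RInt_const /scal /= /mult /= in i1 i2 i3.
  rewrite /plus /=.
  rewrite /b1 /b2 /a in i1 i2 i3 *.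
  nra.
set D := (r - 1) * e * (m/2).
have hD : 0 < D.
  rewrite /D; apply: Rmult_lt_0_compat; [apply: Rmult_lt_0_compat|]; rewrite /m; lra.
have [n0 [_ hn0]] := nfloor_ex (M*T/D) ltac:(apply: Rmult_le_pos; [nra | apply: Rlt_le; apply: Rinv_0_lt_compat; lra]).
have hN : M*T/D < INR n0.+1 by rewrite S_INR; lra.
have hMT : M*T < INR n0.+1 * D.
  have := Rmult_lt_compat_r D _ _ hD hN.
  rewrite (_ : M*T/D*D = M*T) //; field; lra.
have bern : 1 + INR n0.+1 * (r-1) <= r^n0.+1.
  have := Rle_pow_lin (r-1) n0.+1 ltac:(lra).
  by rewrite (_ : 1 + (r-1) = r) //; ring.
have := lb n0.+1.
have : e*(m/2)*(1 + INR n0.+1 * (r-1)) <= e*(m/2*r^n0.+1).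
  rewrite -Rmult_assoc; apply: Rmult_le_compat_l => //.
  apply: Rmult_le_pos; rewrite /m; lra.
rewrite /D in hMT.
have : 0 < e * (m/2) by apply: Rmult_lt_0_compat; rewrite /m; lra.
have : 0 <= M * e by nra.
nra.
Qed.
End Four3.

Lemma fourier_zero T (hT : 0 < T) (f : R -> R) : (forall t, continuous f t) ->
  (forall t, f (t+T) = f t) -> orth T f -> forall x, f x = 0.
Proof.
move=> fc fp hf x.
have H1 := TP_orth T hT f fc fp hf.
have fc' : forall t, continuous (fun t => - f t) t.
  by move=> t; apply: (continuous_opp f).
have fp' : forall t, - f (t+T) = - f t by move=> t; rewrite fp.
have exm g b c : (forall t, continuous g t) -> ex_RInt (fun t => f t * g t) b c.
  by move=> hg; apply: cont_ex => t; apply: cont_mul.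
have nf : orth T (fun t => - f t).
  move=> k; have [h1 h2] := hf k; split.
  - rewrite (RInt_ext _ (fun t => scal (-1) (f t * cos (INR k * om T * t)))).
      rewrite RInt_scal ?h1 ?scal_zero_r //; apply: exm => t.
      by apply: ex_derive_continuous; auto_derive.
    by move=> t _; rewrite /scal /= /mult /=; ring.
  - rewrite (RInt_ext _ (fun t => scal (-1) (f t * sin (INR k * om T * t)))).
      rewrite RInt_scal ?h2 ?scal_zero_r //; apply: exm => t.
      by apply: ex_derive_continuous; auto_derive.
    by move=> t _; rewrite /scal /= /mult /=; ring.
have H2 := TP_orth T hT (fun t => - f t) fc' fp' nf.
case: (Rtotal_order (f x) 0) => [h|[h|h]] //.
- exfalso; apply: (no_pos T hT (fun t => - f t) x fc' H2); lra.
- exfalso; exact: (no_pos T hT f x fc H1 h).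
Qed.

Lemma addRE (x y : R) : (x + y)%R = Rplus x y. Proof. by []. Qed.
Lemma mulRE (x y : R) : (x * y)%R = Rmult x y. Proof. by []. Qed.
Lemma oppRE (x : R) : (- x)%R = Ropp x. Proof. by []. Qed.
Lemma zeroRE : (0%R : R) = R0. Proof. by []. Qed.
Ltac rring := match goal with |- ?a = ?b => change (@eq R a b) end; ring.
Ltac toR := rewrite ?addRE ?mulRE ?oppRE ?zeroRE.

Lemma sum_mulr_R (I : eqType) (r : seq I) (F : I -> R) c :
  Rmult (\sum_(j <- r) F j)%R c = (\sum_(j <- r) Rmult (F j) c)%R.
Proof.
elim: r => [|j r IH]; first by rewrite !big_nil zeroRE Rmult_0_l.
by rewrite !big_cons addRE -IH Rmult_plus_distr_r.
Qed.

Lemma cont_sum (I : eqType) (r : seq I) (F : I -> R -> R) t :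
  (forall j, continuous (F j) t) -> continuous (fun t => (\sum_(j <- r) F j t)%R) t.
Proof.
move=> h; elim: r => [|j r IH].
  by apply: (continuous_ext (fun _ => 0)) => [s|]; [rewrite big_nil | apply: continuous_const].
apply: (continuous_ext (fun s => plus (F j s) (\sum_(j <- r) F j s)%R)) => [s|].
  by rewrite big_cons.
exact: continuous_plus.
Qed.

Lemma is_RInt_sum (I : eqType) (r : seq I) (F : I -> R -> R) c d :
  (forall j, ex_RInt (F j) c d) ->
  is_RInt (fun t => (\sum_(j <- r) F j t)%R) c d (\sum_(j <- r) RInt (F j) c d)%R.
Proof.
move=> h; elim: r => [|j r IH].
  apply: (is_RInt_ext (fun _ => 0)) => [s _|]; first by rewrite big_nil.
  rewrite big_nil; have := is_RInt_const c d 0; by rewrite scal_zero_r.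
apply: (is_RInt_ext (fun s => plus (F j s) (\sum_(j <- r) F j s)%R)) => [s _|].
  by rewrite big_cons.
rewrite big_cons; apply: is_RInt_plus => //; exact: RInt_correct.
Qed.

Lemma RInt_sum (I : eqType) (r : seq I) (F : I -> R -> R) c d :
  (forall j, ex_RInt (F j) c d) ->
  RInt (fun t => (\sum_(j <- r) F j t)%R) c d = (\sum_(j <- r) RInt (F j) c d)%R.
Proof. by move=> h; apply: is_RInt_unique; apply: is_RInt_sum. Qed.

Lemma RInt_lin (F G : R -> R) a b c d : ex_RInt F c d -> ex_RInt G c d ->
  RInt (fun t => a * F t + b * G t) c d = a * RInt F c d + b * RInt G c d.
Proof.
move=> hF hG.
rewrite (RInt_ext _ (fun t => plus (scal a (F t)) (scal b (G t)))) => [|t _]; last by [].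
rewrite RInt_plus ?RInt_scal //; by apply: ex_RInt_scal.
Qed.

Section DDE.
Variables (T : R) (k : nat).
Hypothesis hT : 0 < T.
Let la := lam T k.

Lemma lam_cper t : cos (la * (t + T)) = cos (la * t).
Proof. rewrite -(cos_period (la * t) k); f_equal; rewrite /la /lam; field; lra. Qed.
Lemma lam_sper t : sin (la * (t + T)) = sin (la * t).
Proof. rewrite -(sin_period (la * t) k); f_equal; rewrite /la /lam; field; lra. Qed.

Lemma cont_cos t : continuous (fun t => cos (la * t)) t.
Proof. by apply: ex_derive_continuous; auto_derive. Qed.
Lemma cont_sin t : continuous (fun t => sin (la * t)) t.
Proof. by apply: ex_derive_continuous; auto_derive. Qed.

Variable tau : R.

Lemma shift_lem (g : R -> R) : (forall t, continuous g t) -> (forall t, g (t + T) = g t) ->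
  RInt (fun t => g (t - tau) * cos (la * t)) 0 T =
    cos (la * tau) * RInt (fun t => g t * cos (la * t)) 0 T
  - sin (la * tau) * RInt (fun t => g t * sin (la * t)) 0 T /\
  RInt (fun t => g (t - tau) * sin (la * t)) 0 T =
    cos (la * tau) * RInt (fun t => g t * sin (la * t)) 0 T
  + sin (la * tau) * RInt (fun t => g t * cos (la * t)) 0 T.
Proof.
move=> gc gp.
have exc b c : ex_RInt (fun t => g t * cos (la * t)) b c.
  by apply: cont_ex => t; apply: cont_mul => //; apply: cont_cos.
have exs b c : ex_RInt (fun t => g t * sin (la * t)) b c.
  by apply: cont_ex => t; apply: cont_mul => //; apply: cont_sin.
have gen (h : R -> R) : (forall t, continuous h t) -> (forall t, h (t + T) = h t) ->
    RInt (fun t => h (t - tau)) 0 T = RInt h 0 T.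
  move=> hc hp.
  have := RInt_comp_lin h 1 (- tau) 0 T (cont_ex _ _ _ hc).
  rewrite (_ : 1 * 0 + - tau = - tau); last ring.
  rewrite (_ : 1 * T + - tau = - tau + T); last ring.
  rewrite RInt_per // => <-; apply: RInt_ext => y _.
  by rewrite /scal /= /mult /= !Rmult_1_l.
split.
- have := gen (fun s => g s * cos (la * (s + tau))).
  rewrite (RInt_ext (fun t => g (t - tau) * cos (la * (t - tau + tau))) (fun t => g (t - tau) * cos (la * t))); last first.
    by move=> t _; rewrite (_ : t - tau + tau = t) //; ring.
  move=> ->.
  + rewrite (RInt_ext _ (fun t => cos (la*tau) * (g t * cos (la*t)) + (- sin (la*tau)) * (g t * sin (la*t)))).
      rewrite RInt_lin; [by rewrite /Rminus Ropp_mult_distr_l | exact: exc | exact: exs].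
    move=> t _; rewrite (_ : la * (t + tau) = la * t + la * tau); last ring.
    rewrite cos_plus; rring.
  + by move=> t; apply: cont_mul => //; apply: ex_derive_continuous; auto_derive.
  + move=> t; rewrite gp (_ : la * (t + T + tau) = la * ((t + tau) + T)); last ring.
    by rewrite lam_cper.
- have := gen (fun s => g s * sin (la * (s + tau))).
  rewrite (RInt_ext (fun t => g (t - tau) * sin (la * (t - tau + tau))) (fun t => g (t - tau) * sin (la * t))); last first.
    by move=> t _; rewrite (_ : t - tau + tau = t) //; ring.
  move=> ->.
  + rewrite (RInt_ext _ (fun t => cos (la*tau) * (g t * sin (la*t)) + sin (la*tau) * (g t * cos (la*t)))).
      rewrite RInt_lin; [by [] | exact: exs | exact: exc].
    move=> t _; rewrite (_ : la * (t + tau) = la * t + la * tau); last ring.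
    rewrite sin_plus; rring.
  + by move=> t; apply: cont_mul => //; apply: ex_derive_continuous; auto_derive.
  + move=> t; rewrite gp (_ : la * (t + T + tau) = la * ((t + tau) + T)); last ring.
    by rewrite lam_sper.
Qed.
End DDE.

Lemma u_cont N (A B : 'M[R]_N) tau (u : 'I_N -> R -> R) :
  dde_solution A B tau u -> forall j t, continuous (u j) t.
Proof.
move=> hs j t; apply: ex_derive_continuous.
by exists (\sum_(l < N) (A j l * u l t + B j l * u l (t - tau)))%R; apply/is_derive_Reals; apply: hs.
Qed.

Lemma L4 N (A B : 'M[R]_N) T tau k (hT : 0 < T) (u : 'I_N -> R -> R) :
  dde_solution A B tau u -> T_periodic T u ->
  KerE A B (lam T k) (cos (lam T k * tau)) (sin (lam T k * tau))
    (fun j => RInt (fun t => u j t * cos (lam T k * t)) 0 T)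
    (fun j => RInt (fun t => u j t * sin (lam T k * t)) 0 T).
Proof.
move=> hs hp.
have uc := @u_cont N A B tau u hs.
set Du := fun i t => (\sum_(j < N) (A i j * u j t + B i j * u j (t - tau)))%R.
have shc : forall t, continuous (fun t => t - tau) t.
  by move=> t; apply: ex_derive_continuous; auto_derive.
have ucs : forall j t, continuous (fun t => u j (t - tau)) t.
  move=> j t; apply: (continuous_comp (fun t => t - tau) (u j)) => //; exact: uc.
have Dc i t : continuous (Du i) t.
  apply: cont_sum => j.
  apply: (continuous_ext (fun t => plus (mult (A i j) (u j t)) (mult (B i j) (u j (t - tau))))) => //.
  apply: continuous_plus; apply: continuous_mult; try apply: continuous_const.
    exact: uc.
  exact: ucs.
have hsum (phi : R -> R) : (forall t, continuous phi t) -> forall i,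
  RInt (fun t => Du i t * phi t) 0 T =
  (\sum_(j < N) (A i j * RInt (fun t => u j t * phi t) 0 T
                 + B i j * RInt (fun t => u j (t - tau) * phi t) 0 T))%R.
  move=> pc i.
  rewrite (RInt_ext _ (fun t => (\sum_(j < N) (A i j * (u j t * phi t) + B i j * (u j (t - tau) * phi t)))%R)).
    rewrite RInt_sum; last first.
      move=> j; apply: cont_ex => t.
      apply: (continuous_ext (fun t => plus (mult (A i j) (u j t * phi t)) (mult (B i j) (u j (t - tau) * phi t)))) => //.
      apply: continuous_plus; apply: continuous_mult; try apply: continuous_const;
        apply: cont_mul => //; try exact: uc; exact: ucs.
    apply: eq_bigr => j _.
    rewrite (RInt_ext _ (fun t => A i j * (u j t * phi t) + B i j * (u j (t - tau) * phi t))) //.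
    rewrite RInt_lin //; apply: cont_ex => t; apply: cont_mul => //; try exact: uc; exact: ucs.
  move=> t _; rewrite /Du sum_mulr_R; apply: eq_bigr => j _; toR; rring.
have ftc (phi dphi : R -> R) i : (forall t, is_derive phi t (dphi t)) ->
    (forall t, continuous dphi t) -> phi T = phi 0 ->
    RInt (fun t => Du i t * phi t) 0 T + RInt (fun t => u i t * dphi t) 0 T = 0.
  move=> pd dc pT.
  have pc : forall t, continuous phi t.
    by move=> t; apply: ex_derive_continuous; exists (dphi t).
  have h := is_RInt_derive (fun t => u i t * phi t)
     (fun t => plus (mult (Du i t) (phi t)) (mult (u i t) (dphi t))) 0 T.
  have := h (fun t _ => is_derive_mult (u i) phi t (Du i t) (dphi t)
      (proj2 (is_derive_Reals _ _ _) (hs t i)) (pd t) Rmult_comm).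
  move=> {h} h.
  have {}h := is_RInt_unique _ _ _ _ (h (fun t _ => continuous_plus _ _ t
      (continuous_mult _ _ t (Dc i t) (pc t)) (continuous_mult _ _ t (uc i t) (dc t)))).
  rewrite RInt_plus in h.
  - change (plus (RInt (fun x => mult (Du i x) (phi x)) 0 T) (RInt (fun x => mult (u i x) (dphi x)) 0 T) = 0).
    rewrite h /minus /plus /opp /=.
    have := hp 0 i; rewrite Rplus_0_l => ->; rewrite pT; ring.
  - apply: cont_ex => t; exact: (continuous_mult _ _ t (Dc i t) (pc t)).
  - apply: cont_ex => t; exact: (continuous_mult _ _ t (uc i t) (dc t)).
have hp' j : forall t, u j (t + T) = u j t by move=> t; apply: hp.
have cc : forall t, continuous (fun t => cos (lam T k * t)) t.
  by move=> t; apply: ex_derive_continuous; auto_derive.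
have sc : forall t, continuous (fun t => sin (lam T k * t)) t.
  by move=> t; apply: ex_derive_continuous; auto_derive.
move=> i; split.
- have fc := ftc (fun t => cos (lam T k * t)) (fun t => - (lam T k * sin (lam T k * t))) i.
  have := fc ltac:(by move=> t; auto_derive => //; rring)
    ltac:(by move=> t; apply: ex_derive_continuous; auto_derive)
    ltac:(by have := lam_cper T k hT 0; rewrite Rplus_0_l).
  rewrite (RInt_ext (fun t => u i t * - (lam T k * sin (lam T k * t)))
     (fun t => scal (- lam T k) (u i t * sin (lam T k * t)))); last first.
    by move=> t _; rewrite /scal /= /mult /=; rring.
  rewrite RInt_scal; last by apply: cont_ex => t; apply: cont_mul.
  rewrite /scal /= /mult /= => e1.
  transitivity (RInt (fun t => Du i t * cos (lam T k * t)) 0 T); last first.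
    change (RInt (fun t => Du i t * cos (lam T k * t)) 0 T = lam T k * RInt (fun t => u i t * sin (lam T k * t)) 0 T).
    lra.
  rewrite hsum //; apply: eq_bigr => j _.
  rewrite (proj1 (shift_lem T k hT tau (u j) (uc j) (hp' j))); toR; rring.
- have fc := ftc (fun t => sin (lam T k * t)) (fun t => lam T k * cos (lam T k * t)) i.
  have := fc ltac:(by move=> t; auto_derive => //; rring)
    ltac:(by move=> t; apply: ex_derive_continuous; auto_derive)
    ltac:(by have := lam_sper T k hT 0; rewrite Rplus_0_l).
  rewrite (RInt_ext (fun t => u i t * (lam T k * cos (lam T k * t)))
     (fun t => scal (lam T k) (u i t * cos (lam T k * t)))); last first.
    by move=> t _; rewrite /scal /= /mult /=; rring.
  rewrite RInt_scal; last by apply: cont_ex => t; apply: cont_mul.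
  rewrite /scal /= /mult /= => e1.
  transitivity (RInt (fun t => Du i t * sin (lam T k * t)) 0 T); last first.
    change (RInt (fun t => Du i t * sin (lam T k * t)) 0 T = - (lam T k * RInt (fun t => u i t * cos (lam T k * t)) 0 T)).
    lra.
  rewrite hsum //; apply: eq_bigr => j _.
  rewrite (proj2 (shift_lem T k hT tau (u j) (uc j) (hp' j))); toR; rring.
Qed.

Definition usol N (C S : 'I_N -> R) (la : R) : 'I_N -> R -> R :=
  fun j t => C j * cos (la * t) + S j * sin (la * t).
Arguments usol {N}.

Lemma L3 N (A B : 'M[R]_N) T tau k (hT : 0 < T) C S :
  KerE A B (lam T k) (cos (lam T k * tau)) (sin (lam T k * tau)) C S ->
  dde_solution A B tau (usol C S (lam T k)) /\ T_periodic T (usol C S (lam T k)).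
Proof.
move=> hK; split; last first.
  by move=> t i; rewrite /usol lam_cper // lam_sper.
move=> t i.
have [E1 E2] := hK i.
have hsum : (\sum_(j < N) (A i j * usol C S (lam T k) j t + B i j * usol C S (lam T k) j (t - tau)))%R
   = cos (lam T k * t) * (lam T k * S i) + sin (lam T k * t) * (- (lam T k * C i)).
  rewrite -(mulRE (lam T k) (S i)) -(mulRE (lam T k) (C i)) -oppRE -E1 -E2.
  rewrite -(mulRE (cos _)) -(mulRE (sin _)) -addRE !mulr_sumr -big_split /=.
  apply: eq_bigr => j _; rewrite /usol.
  rewrite (_ : lam T k * (t - tau) = lam T k * t - lam T k * tau); last by ring.
  rewrite cos_minus sin_minus; toR; ring.
rewrite hsum; apply/is_derive_Reals; rewrite /usol; auto_derive => //; rring.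
Qed.

Theorem mainTheorem5 (N : nat) (A B : 'M[R]_N) (tau T : R)
    (htau : 0 < tau) (hT : 0 < T) :
  (~ exists u : 'I_N -> R -> R,
       dde_solution A B tau u /\ T_periodic T u /\ nontrivial u)
  <-> (forall k : nat, hk A B tau T k <> 0).
Proof.
split.
- move=> hno k hk0.
  have [C [S [hK [i hi]]]] := @L1 N A B tau T k hk0.
  have [hs hp] := @L3 N A B T tau k hT C S hK.
  apply: hno; exists (usol C S (lam T k)); split => //; split => //.
  exists 0, i; rewrite /usol Rmult_0_r cos_0 sin_0 Rmult_0_r Rmult_1_r Rplus_0_r //.
- move=> hh [u [hs [hp [t [i hti]]]]].
  apply: hti.
  have uc := @u_cont N A B tau u hs.
  apply: (fourier_zero T hT (u i)); [exact: uc | by move=> s; apply: hp | move=> k].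
  have := @L2 N A B tau T k _ _ (hh k) (@L4 N A B T tau k hT u hs hp) i; case=> h1 h2.
  have e s : INR k * om T * s = lam T k * s by rewrite /om /lam; field; lra.
  split.
  + by rewrite -[RHS]h1; apply: RInt_ext => s _; rewrite e.
  + by rewrite -[RHS]h2; apply: RInt_ext => s _; rewrite e.
Qed.
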